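(* Let $p\ge 2$, let $s\in\mathbb{R}^n$ be nonzero and let $\mathcal{R}\in\mathbb{R}^{\otimes^{p-1} n}_{\mathrm{sym}}$. Then the problem of minimizing $\|\mathcal{U}\|_F$ over $\mathcal{U}\in\mathbb{R}^{\otimes^p n}_{\mathrm{sym}}$ subject to $\mathcal{U}[s]=\mathcal{R}$ has a unique solution, and this solution is the unique $\mathcal{U}\in\mathbb{R}^{\otimes^p n}_{\mathrm{sym}}$ satisfying both $\mathcal{U}[s]=\mathcal{R}$ and $\mathcal{U}[u_1,\dots,u_p]=0$ whenever all of $u_1,\dots,u_p\in\mathbb{R}^n$ are orthogonal to $s$.
   Context: A $p$-tensor $\mathcal{T} \in \mathbb{R}^{\otimes^p n}$ is a multilinear map $(\mathbb{R}^n)^p \to \mathbb{R}$; $\mathcal{T}[s]$ denotes the $(p-1)$-tensor obtained by fixing the first argument to $s$. $\mathcal{T}$ is symmetric if it is invariant under all permutations of its arguments; $\mathbb{R}^{\otimes^p n}_{\mathrm{sym}}$ is the space of symmetric $p$-tensors. $\|\cdot\|_F$ is the Frobenius norm of the array of entries $\mathcal{T}[e_{i_1},\dots,e_{i_p}]$. *)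

(* Defs.v *)
From HB Require Import structures.
From mathcomp Require Import all_boot all_order all_algebra.
From mathcomp Require Import fingroup perm reals.
Set Implicit Arguments. Unset Strict Implicit. Unset Printing Implicit Defensive.
Import Order.TTheory GRing.Theory Num.Theory.
Local Open Scope ring_scope.

(* A p-tensor on R^n, given by its array of entries T[e_{i_1},...,e_{i_p}],
   indexed by multi-indices idx : 'I_p -> 'I_n. *)
Definition tensor (R : Type) (n p : nat) := {ffun {ffun 'I_p -> 'I_n} -> R}.

Definition sym_tensor (R : Type) n p (T : tensor R n p) : Prop :=
  forall (sigma : 'S_p) (idx : {ffun 'I_p -> 'I_n}),
    T [ffun k => idx (sigma k)] = T idx.

Definition teval (R : ringType) n p (T : tensor R n p) (u : 'I_p -> 'rV[R]_n) : R :=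
  \sum_(idx : {ffun 'I_p -> 'I_n}) T idx * \prod_(k < p) u k 0 (idx k).

(* The p-index (i, idx') : first coordinate i, the remaining p-1 given by idx'. *)
Definition cons_idx n p (i : 'I_n) (idx' : {ffun 'I_p.-1 -> 'I_n}) :
  {ffun 'I_p -> 'I_n} :=
  [ffun k : 'I_p => if insub (val k).-1 is Some j then
                      (if val k == 0%N then i else idx' j) else i].

(* T[s] : the (p-1)-tensor obtained by fixing the first argument to s. *)
Definition contract (R : ringType) n p (s : 'rV[R]_n) (T : tensor R n p) :
  tensor R n p.-1 :=
  [ffun idx' => \sum_(i < n) s 0 i * T (cons_idx i idx')].

Definition frob (R : rcfType) n p (T : tensor R n p) : R :=
  Num.sqrt (\sum_(idx : {ffun 'I_p -> 'I_n}) T idx ^+ 2).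

Definition dotv (R : ringType) n (u v : 'rV[R]_n) : R := \sum_(i < n) u 0 i * v 0 i.

(* Main.v *)
Require Import Defs.
From HB Require Import structures.
From mathcomp Require Import all_boot all_order all_algebra.
From mathcomp Require Import fingroup perm reals.
From mathcomp Require Import ring lra zify.
Set Implicit Arguments. Unset Strict Implicit. Unset Printing Implicit Defensive.
Import Order.TTheory GRing.Theory Num.Theory.
Local Open Scope ring_scope.

Section Gen.
Variable R : realType.
Variable n : nat.

Definition ev (j : 'I_n) : 'rV[R]_n := \row_(i < n) ((i == j)%:R : R).

Lemma teval_basis p (T : tensor R n p) (idx : {ffun 'I_p -> 'I_n}) :
  teval T (fun k => ev (idx k)) = T idx.
Proof.
rewrite /teval (bigD1 idx) //=.
rewrite [X in _ * X]big1 ?mulr1; last by move=> k _; rewrite mxE eqxx.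
rewrite big1 ?addr0 //.
move=> jdx hj.
have : ~~ [forall k, jdx k == idx k].
  apply: contra hj => /forallP h; apply/eqP/ffunP => k; exact/eqP.
rewrite negb_forall => /existsP [k hk].
by rewrite (bigD1 k) //= mxE (negbTE hk) mul0r mulr0.
Qed.

Lemma tensor_eq p (T1 T2 : tensor R n p) :
  (forall u, teval T1 u = teval T2 u) -> T1 = T2.
Proof. by move=> h; apply/ffunP => idx; rewrite -!teval_basis h. Qed.

Definition tsub p (T1 T2 : tensor R n p) : tensor R n p :=
  [ffun idx => T1 idx - T2 idx].

Lemma teval_sub p (T1 T2 : tensor R n p) u :
  teval (tsub T1 T2) u = teval T1 u - teval T2 u.
Proof.
rewrite /teval -sumrB; apply: eq_bigr => idx _; by rewrite ffunE mulrBl.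
Qed.

Lemma teval_ext p (T : tensor R n p) u v :
  (forall k, u k = v k) -> teval T u = teval T v.
Proof.
move=> h; apply: eq_bigr => idx _; congr (_ * _); apply: eq_bigr => k _.
by rewrite h.
Qed.

Lemma prod_telescope p (a b : 'I_p -> R) :
  \prod_k a k - \prod_k b k =
  \sum_(m < p) \prod_(k < p)
     (if (k < m)%N then b k else if k == m then a k - b k else a k).
Proof.
pose h (m : nat) := \prod_(k < p) (if (k < m)%N then b k else a k).
have h0 : h 0%N = \prod_k a k by apply: eq_bigr.
have hp : h p = \prod_k b k by apply: eq_bigr => k _; rewrite ltn_ord.
have step : forall m : 'I_p, \prod_(k < p)
     (if (k < m)%N then b k else if k == m then a k - b k else a k)
     = h m - h m.+1.
  move=> m; rewrite /h (bigD1 m) //= [X in _ = X - _](bigD1 m) //=.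
  rewrite [X in _ = _ - X](bigD1 m) //= ltnn eqxx ltnSn.
  set C := \prod_(k < p | k != m) _.
  have -> : \prod_(i < p | i != m) (if (i < m)%N then b i else a i) = C.
    apply: eq_bigr => k hk; by rewrite (negbTE hk).
  have -> : \prod_(i < p | i != m) (if (i < m.+1)%N then b i else a i) = C.
    apply: eq_bigr => k hk; rewrite (negbTE hk) ltnS leq_eqVlt.
    by have -> : (nat_of_ord k == nat_of_ord m) = false by apply/negbTE.
  by rewrite mulrBl.
rewrite (eq_bigr _ (fun m _ => step m)) -h0 -hp.
rewrite -(big_mkord xpredT (fun m => h m - h m.+1)).
rewrite -[LHS]opprB -telescope_sumr // -sumrN; apply: eq_bigr => i _.
by rewrite opprB.
Qed.

Definition mixv p (a b : 'I_p -> 'rV[R]_n) (m : 'I_p) : 'I_p -> 'rV[R]_n :=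
  fun k => if (k < m)%N then b k else if k == m then a k - b k else a k.

Lemma teval_telescope p (T : tensor R n p) a b :
  teval T a - teval T b = \sum_(m < p) teval T (mixv a b m).
Proof.
rewrite /teval -sumrB exchange_big /=; apply: eq_bigr => idx _.
rewrite -mulrBr prod_telescope mulr_sumr; apply: eq_bigr => m _.
congr (_ * _); apply: eq_bigr => k _; rewrite /mixv.
by case: ifP => // _; case: ifP => // _; rewrite !mxE.
Qed.

Lemma teval_scale p (T : tensor R n p) u (m : 'I_p) c w :
  u m = c *: w ->
  teval T u = c * teval T (fun k => if k == m then w else u k).
Proof.
move=> hm; rewrite /teval mulr_sumr; apply: eq_bigr => idx _.
rewrite mulrCA; congr (_ * _).
rewrite (bigD1 m) //= [in RHS](bigD1 m) //= eqxx hm mxE mulrA; congr (_ * _).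
by apply: eq_bigr => k hk; rewrite (negbTE hk).
Qed.

Lemma teval_zero p (T : tensor R n p) u (m : 'I_p) :
  u m = 0 -> teval T u = 0.
Proof.
move=> hm; rewrite (@teval_scale _ _ _ m 0 0) ?mul0r //.
by rewrite hm scale0r.
Qed.

End Gen.


Section Pair.
Variable R : realType.
Variable n p : nat.

Definition pairK (U W : tensor R n p) (K : 'I_p -> 'M[R]_n) :=
  \sum_(idx : {ffun 'I_p -> 'I_n}) \sum_(jdx : {ffun 'I_p -> 'I_n})
     U idx * W jdx * \prod_k K k (idx k) (jdx k).

Lemma pairL U W K : pairK U W K =
  \sum_(idx : {ffun 'I_p -> 'I_n}) U idx * teval W (fun k => row (idx k) (K k)).
Proof.
apply: eq_bigr => idx _; rewrite /teval mulr_sumr; apply: eq_bigr => jdx _.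
rewrite -mulrA; congr (_ * (_ * _)); apply: eq_bigr => k _; by rewrite mxE.
Qed.

Lemma pairR U W K : pairK U W K =
  \sum_(jdx : {ffun 'I_p -> 'I_n}) W jdx * teval U (fun k => row (jdx k) (K k)^T).
Proof.
rewrite /pairK exchange_big; apply: eq_bigr => jdx _; rewrite /teval mulr_sumr.
apply: eq_bigr => idx _.
rewrite mulrCA -mulrA; congr (_ * (_ * _)); apply: eq_bigr => k _; by rewrite !mxE.
Qed.

Lemma pair_id U W : pairK U W (fun _ => 1%:M) =
  \sum_(idx : {ffun 'I_p -> 'I_n}) U idx * W idx.
Proof.
rewrite pairL; apply: eq_bigr => idx _; rewrite -[W idx]teval_basis; congr (_ * _).
apply: teval_ext => k; apply/rowP => j; by rewrite !mxE eq_sym.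
Qed.

Definition mixm (A B : 'I_p -> 'M[R]_n) (m : 'I_p) : 'I_p -> 'M[R]_n :=
  fun k => if (k < m)%N then B k else if k == m then A k - B k else A k.

Lemma pair_telescope U W A B :
  pairK U W A - pairK U W B = \sum_(m < p) pairK U W (mixm A B m).
Proof.
rewrite /pairK -sumrB exchange_big /=; apply: eq_bigr => idx _.
rewrite -sumrB exchange_big /=; apply: eq_bigr => jdx _.
rewrite -mulrBr prod_telescope mulr_sumr; apply: eq_bigr => m _.
congr (_ * _); apply: eq_bigr => k _; rewrite /mixm.
by case: ifP => // _; case: ifP => // _; rewrite !mxE.
Qed.

End Pair.

Section Orth.
Variable R : realType.
Variable n p : nat.
Variable s : 'rV[R]_n.
Hypothesis hss : dotv s s != 0.

Definition Pm : 'M[R]_n :=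
  \matrix_(i, j) ((i == j)%:R - s 0 i * s 0 j / dotv s s).

Lemma Pm_perp (j : 'I_n) : dotv (row j (Pm)^T) s = 0.
Proof.
rewrite /dotv.
under eq_bigr => i _ do rewrite !mxE mulrBl.
rewrite sumrB (bigD1 j) //= eqxx mul1r big1 ?addr0; last first.
  by move=> i hi; rewrite (negbTE hi) mul0r.
under eq_bigr => i _ do rewrite [s 0 i * s 0 j / _ * s 0 i]mulrC !mulrA.
rewrite -mulr_suml -mulr_suml.
have h : (\sum_(i < n) s 0 i * s 0 i) = dotv s s by [].
by rewrite h mulrAC mulfV // mul1r subrr.
Qed.

Lemma row_id_Pm (i : 'I_n) : row i (1%:M - Pm) = (s 0 i / dotv s s) *: s.
Proof.
apply/rowP => j; rewrite !mxE.
by rewrite opprB addrCA subrr addr0 mulrAC.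
Qed.

Lemma orth (U W : tensor R n p) :
  (forall u, (forall k, dotv (u k) s = 0) -> teval U u = 0) ->
  (forall u (m : 'I_p), u m = s -> teval W u = 0) ->
  \sum_(idx : {ffun 'I_p -> 'I_n}) U idx * W idx = 0.
Proof.
move=> hU hW.
rewrite -pair_id.
have := pair_telescope U W (fun _ => 1%:M) (fun _ => Pm).
move/eqP; rewrite subr_eq => /eqP ->.
rewrite [pairK _ _ (fun _ => Pm)]pairR [X in _ + X]big1 ?addr0; last first.
  by move=> jdx _; rewrite hU ?mulr0 // => k; apply: Pm_perp.
rewrite big1 // => m _; rewrite pairL big1 // => idx _.
rewrite (@teval_scale _ _ _ _ _ m (s 0 (idx m) / dotv s s) s) ?mulr0 //.
  by rewrite (hW _ m) ?mulr0 // eqxx.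
by rewrite /mixm ltnn eqxx row_id_Pm.
Qed.

End Orth.


Section Contr.
Variable R : realType.
Variable n q : nat.

Lemma cons_idx0 (i : 'I_n) (idx' : {ffun 'I_q -> 'I_n}) :
  @cons_idx n q.+1 i idx' ord0 = i.
Proof. by rewrite ffunE /=; case: insub. Qed.

Lemma cons_idxS (i : 'I_n) (idx' : {ffun 'I_q -> 'I_n}) (j : 'I_q) :
  @cons_idx n q.+1 i idx' (lift ord0 j) = idx' j.
Proof.
rewrite ffunE /=. rewrite insubT /=; first exact: ltn_ord.
move=> h; congr (idx' _); exact: val_inj.
Qed.

Lemma teval_contract (T : tensor R n q.+1) (s : 'rV[R]_n) (u : 'I_q.+1 -> 'rV[R]_n) :
  u ord0 = s ->
  teval (contract s T) (fun j => u (lift ord0 j)) = teval T u.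
Proof.
move=> h0.
rewrite /teval.
rewrite (reindex (fun pr : 'I_n * {ffun 'I_q -> 'I_n} => @cons_idx n q.+1 pr.1 pr.2)) /=;
  last first.
  apply: onW_bij.
  exists (fun idx : {ffun 'I_q.+1 -> 'I_n} => (idx ord0, [ffun j => idx (lift ord0 j)])).
    move=> [i idx'] /=; rewrite cons_idx0; congr pair; apply/ffunP => j.
    by rewrite ffunE cons_idxS.
  move=> idx /=; apply/ffunP => k; case: (unliftP ord0 k) => [j ->|->].
    by rewrite cons_idxS ffunE.
  by rewrite cons_idx0.
rewrite -(pair_big xpredT xpredT (fun i idx' => T (@cons_idx n q.+1 i idx') *
   \prod_(k < q.+1) u k 0 (@cons_idx n q.+1 i idx' k))) /=.
rewrite exchange_big /=; apply: eq_bigr => idx' _.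
rewrite ffunE mulr_suml; apply: eq_bigr => i _.
rewrite big_ord_recl cons_idx0 h0.
under [in RHS]eq_bigr => j _ do rewrite cons_idxS.
ring.
Qed.

End Contr.

Section Perm.
Variable R : realType.
Variable n p : nat.

Definition permt (T : tensor R n p) (sigma : 'S_p) : tensor R n p :=
  [ffun idx : {ffun 'I_p -> 'I_n} => T [ffun k => idx (sigma k)]].

Lemma teval_permt (T : tensor R n p) sigma u :
  teval (permt T sigma) u = teval T (fun k => u (sigma k)).
Proof.
rewrite /teval (reindex_inj (h := fun jdx : {ffun 'I_p -> 'I_n} =>
   [ffun k => jdx ((sigma^-1)%g k)])); last first.
  move=> a b /ffunP h; apply/ffunP => k.
  by have := h (sigma k); rewrite !ffunE permK.
apply: eq_bigr => jdx _; rewrite ffunE.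
have -> : [ffun k => [ffun k0 => jdx ((sigma^-1)%g k0)] (sigma k)] = jdx.
  by apply/ffunP => k; rewrite !ffunE permK.
congr (_ * _).
rewrite (reindex_inj (h := sigma)) /=; last exact: perm_inj.
by apply: eq_bigr => k _; rewrite ffunE permK.
Qed.

Lemma sym_permt (T : tensor R n p) : sym_tensor T -> forall sigma, permt T sigma = T.
Proof. by move=> h sigma; apply/ffunP => idx; rewrite ffunE h. Qed.

Lemma permt_sym (T : tensor R n p) : (forall sigma, permt T sigma = T) -> sym_tensor T.
Proof. by move=> h sigma idx; rewrite -{2}(h sigma) ffunE. Qed.

Lemma sym_teval (T : tensor R n p) : sym_tensor T -> forall (sigma : 'S_p) u,
  teval T (fun k => u (sigma k)) = teval T u.
Proof. by move=> h sigma u; rewrite -(teval_permt T sigma u) sym_permt. Qed.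

Lemma sym_teval_inj (T : tensor R n p) : sym_tensor T -> forall (f : 'I_p -> 'I_p), injective f ->
  forall u, teval T (fun k => u (f k)) = teval T u.
Proof.
move=> h f hf u; rewrite -(sym_teval h (perm hf) u).
by apply: teval_ext => k; rewrite permE.
Qed.

End Perm.


Section Phi.
Variable R : realType.
Variable n q : nat.
Variable s : 'rV[R]_n.
Hypothesis hss : dotv s s != 0.
Variable Rt : tensor R n q.+1.

Definition cf (x : 'rV[R]_n) := dotv x s / dotv s s.

Definition argsF (m : 'I_q.+2) (x : 'I_q.+2 -> 'rV[R]_n) : 'I_q.+1 -> 'rV[R]_n :=
  fun j => if (j < m)%N then x (lift m j) *m Pm s else x (lift m j).

Definition Fx (x : 'I_q.+2 -> 'rV[R]_n) :=
  \sum_(m < q.+2) cf (x m) * teval Rt (argsF m x).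

Definition gco (m : 'I_q.+2) (jdx : {ffun 'I_q.+1 -> 'I_n}) (k : 'I_q.+2) (i : 'I_n) : R :=
  if unlift m k is Some j then
    (if (j < m)%N then Pm s i (jdx j) else (i == jdx j)%:R)
  else s 0 i / dotv s s.

Definition Phi : tensor R n q.+2 :=
  [ffun idx : {ffun 'I_q.+2 -> 'I_n} =>
     \sum_(m < q.+2) \sum_(jdx : {ffun 'I_q.+1 -> 'I_n})
        Rt jdx * \prod_k gco m jdx k (idx k)].

Lemma teval_Phi x : teval Phi x = Fx x.
Proof.
rewrite /teval /Fx.
under eq_bigr do rewrite ffunE mulr_suml.
rewrite exchange_big /=; apply: eq_bigr => m _.
under eq_bigr do rewrite mulr_suml.
rewrite exchange_big /= mulr_sumr; apply: eq_bigr => jdx _.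
have -> : \sum_(i : {ffun 'I_q.+2 -> 'I_n})
     Rt jdx * \prod_k gco m jdx k (i k) * \prod_(k < q.+2) x k 0 (i k)
   = Rt jdx * \prod_(k < q.+2) \sum_(i < n) (x k 0 i * gco m jdx k i).
  rewrite bigA_distr_bigA mulr_sumr; apply: eq_bigr => idx _.
  by rewrite -mulrA -big_split /=; congr (_ * _); apply: eq_bigr => k _; rewrite mulrC.
rewrite (bigD1_ord m) //= mulrCA; congr (_ * _).
  rewrite /gco unlift_none /cf /dotv mulr_suml; apply: eq_bigr => i _.
  by rewrite mulrA.
congr (_ * _).
apply: eq_bigr => j _; rewrite /gco liftK /argsF.
case: ifP => _; first by rewrite mxE.
rewrite (bigD1 (jdx j)) //= eqxx mulr1 big1 ?addr0 // => i hi.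
by rewrite (negbTE hi) mulr0.
Qed.


Lemma sP : s *m Pm s = 0.
Proof.
apply/rowP => j; rewrite !mxE.
rewrite -[RHS](Pm_perp hss j) /dotv.
by apply: eq_bigr => i _; rewrite !mxE mulrC.
Qed.

Lemma vecP y : y - y *m Pm s = cf y *: s.
Proof.
apply/rowP => i; rewrite !mxE.
under eq_bigr => l _ do rewrite !mxE mulrBr.
rewrite sumrB (bigD1 i) //= eqxx mulr1 big1 ?addr0; last first.
  by move=> l hl; rewrite (negbTE hl) mulr0.
rewrite opprB addrCA subrr addr0 /cf /dotv mulr_suml mulr_suml.
by apply: eq_bigr => l _; ring.
Qed.

Lemma cf_s : cf s = 1.
Proof. by rewrite /cf mulfV. Qed.

Ltac ordeq := apply: val_inj; rewrite /= /bump ?inordK; repeat (case: leqP => ?); lia.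

Lemma Fx_CE (hR : sym_tensor Rt) x (k : 'I_q.+2) :
  x k = s -> Fx x = teval Rt (fun j => x (lift k j)).
Proof.
move=> hk.
set a := fun j => x (lift k j).
set b := argsF k x.
pose G (m : 'I_q.+2) := cf (x m) * teval Rt (argsF m x).
have hk2 : (k <= q.+1)%N by rewrite -ltnS ltn_ord.
have split1 : Fx x = \sum_(0 <= m < k) G (inord m) + teval Rt b.
  have -> : Fx x = \sum_(0 <= m < q.+2) G (inord m).
    by rewrite big_mkord; apply: eq_bigr => m _; rewrite inord_val.
  rewrite (big_cat_nat _ (n:=k)) //=; last exact: ltnW.
  have Gk : G k = teval Rt b by rewrite /G hk cf_s mul1r.
  rewrite (big_ltn (ltn_ord k)) inord_val Gk addrA.
  rewrite [X in _ + X]big_nat_cond [X in _ + X]big1 ?addr0 //.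
  move=> m /andP [/andP [hm1 hm2] _].
  rewrite /G (@teval_zero _ _ _ _ _ (inord k)) ?mulr0 //.
  rewrite /argsF.
  have hlt : ((inord k : 'I_q.+1) < (inord m : 'I_q.+2))%N.
    rewrite !inordK //; lia.
  rewrite hlt.
  have -> : lift (inord m) (inord k : 'I_q.+1) = k by ordeq.
  by rewrite hk sP.
have split2 : teval Rt a - teval Rt b =
    \sum_(0 <= j < k) teval Rt (mixv a b (inord j)).
  rewrite teval_telescope.
  have -> : \sum_(m < q.+1) teval Rt (mixv a b m)
          = \sum_(0 <= j < q.+1) teval Rt (mixv a b (inord j)).
    by rewrite big_mkord; apply: eq_bigr => m _; rewrite inord_val.
  rewrite (big_cat_nat _ (n:=k)) //= [X in _ + X]big_nat_cond [X in _ + X]big1 ?addr0 //.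
  move=> j /andP [/andP [hj1 hj2] _].
  apply: (@teval_zero _ _ _ _ _ (inord j)).
  rewrite /mixv ltnn eqxx /a /b /argsF.
  have -> : ((inord j : 'I_q.+1) < k)%N = false.
    rewrite inordK; lia.
  by rewrite subrr.
have term : forall j, (j < k)%N ->
   teval Rt (mixv a b (inord j)) = G (inord j).
  move=> j hj.
  have hjq : (j < q.+1)%N by lia.
  have hjq2 : (j < q.+2)%N by lia.
  pose jj : 'I_q.+1 := inord j.
  pose mm : 'I_q.+2 := inord j.
  have vjj : (jj : nat) = j by rewrite /jj inordK.
  have vmm : (mm : nat) = j by rewrite /mm inordK.
  have hl : lift k jj = mm by ordeq.
  rewrite (@teval_scale _ _ _ _ _ jj (cf (x mm)) s); last first.
    rewrite /mixv ltnn eqxx /a /b /argsF.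
    have -> : (jj < k)%N by rewrite vjj.
    by rewrite hl vecP.
  rewrite /G; congr (_ * _).
  pose taun (t : nat) := if (t < j)%N then t else if (t.+1 < k)%N then t.+1
                         else if t.+1 == k then j else t.
  have taub : forall t : 'I_q.+1, (taun t < q.+1)%N.
    move=> t; have := ltn_ord t; rewrite /taun.
    case: (ltnP t j) => ?; case: (ltnP t.+1 k) => ?; case: (@eqP _ t.+1 k) => ?; lia.
  pose tau (t : 'I_q.+1) : 'I_q.+1 := inord (taun t).
  have vtau : forall t, (tau t : nat) = taun t by move=> t; rewrite /tau inordK.
  have tinj : injective tau.
    move=> t1 t2 /(congr1 (@nat_of_ord _)); rewrite !vtau /taun => h; apply: val_inj => /=.
    move: h.
    case: (ltnP t1 j) => ?; case: (ltnP t1.+1 k) => ?; case: (@eqP _ t1.+1 k) => ?;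
    case: (ltnP t2 j) => ?; case: (ltnP t2.+1 k) => ?; case: (@eqP _ t2.+1 k) => ?; lia.
  rewrite -(sym_teval_inj hR tinj); apply: teval_ext => t.
  have hvt := vtau t; move: hvt; rewrite /taun => hvt.
  have hvt2 := ltn_ord (tau t).
  rewrite /mixv /a /b /argsF -!val_eqE /=.
  have vj1 : nat_of_ord (inord j : 'I_q.+1) = j by rewrite inordK.
  have vj2 : nat_of_ord (inord j : 'I_q.+2) = j by rewrite inordK.
  rewrite ?vj1 ?vj2.
  move: hvt; repeat (case: ifP => ?); move=> hvt; try lia.
  all: try by (congr (x _ *m _); apply: val_inj; rewrite /= /bump ?vj1 ?vj2; repeat (case: leqP => ?); lia).
  all: try by (congr (x _); apply: val_inj; rewrite /= /bump ?vj1 ?vj2; repeat (case: leqP => ?); lia).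
  by (apply: (eq_trans (esym hk)); congr (x _); apply: val_inj; rewrite /= /bump ?vj1 ?vj2; repeat (case: leqP => ?); lia).
move/eqP: split2; rewrite subr_eq => /eqP ->.
rewrite split1; congr (_ + _).
apply: eq_big_nat => j /andP [_ hj]; by rewrite term.
Qed.


Lemma Phi_perp u : (forall k, dotv (u k) s = 0) -> teval Phi u = 0.
Proof.
move=> h; rewrite teval_Phi /Fx big1 // => m _.
by rewrite /cf h mul0r mul0r.
Qed.

Lemma sumsq0 p (D : tensor R n p) :
  \sum_(idx : {ffun 'I_p -> 'I_n}) D idx * D idx = 0 -> forall idx, D idx = 0.
Proof.
move=> h idx.
have : D idx * D idx = 0.
  apply: (psumr_eq0P _ h) => // i _; by rewrite -expr2 sqr_ge0.
by move/eqP; rewrite mulf_eq0 orbb => /eqP.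
Qed.

Lemma Phi_sym (hR : sym_tensor Rt) : sym_tensor Phi.
Proof.
apply: permt_sym => sigma.
pose D := tsub (permt Phi sigma) Phi.
have hD : forall u, teval D u = Fx (fun k => u (sigma k)) - Fx u.
  by move=> u; rewrite teval_sub teval_permt !teval_Phi.
have h1 : forall u, (forall k, dotv (u k) s = 0) -> teval D u = 0.
  move=> u hu; rewrite /D teval_sub teval_permt !Phi_perp ?subrr //.
have h2 : forall u (m : 'I_q.+2), u m = s -> teval D u = 0.
  move=> u m hm; rewrite hD.
  pose m' := (sigma^-1)%g m.
  have hm' : sigma m' = m by rewrite /m' permKV.
  rewrite (@Fx_CE hR _ m'); last by rewrite hm'.
  rewrite (@Fx_CE hR _ m) //; apply/eqP; rewrite subr_eq0; apply/eqP.
  have hne : forall j, sigma (lift m' j) != m.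
    by move=> j; rewrite -hm' (inj_eq perm_inj) eq_sym neq_lift.
  pose f (j : 'I_q.+1) := odflt j (unlift m (sigma (lift m' j))).
  have hf : forall j, lift m (f j) = sigma (lift m' j).
    move=> j; have hn : m != sigma (lift m' j) by rewrite eq_sym hne.
    have [j' e1 e2] := unlift_some hn.
    by rewrite /f e2 /= e1.
  have finj : injective f.
    move=> j1 j2 e; apply: (@lift_inj _ m'); apply: (@perm_inj _ sigma).
    by rewrite -!hf e.
  rewrite -(sym_teval_inj hR finj (fun j => u (lift m j))).
  by apply: teval_ext => j; rewrite hf.
have := orth hss h1 h2 => /sumsq0 hz.
apply/ffunP => idx; have := hz idx; rewrite /D ffunE => /eqP.
by rewrite subr_eq0 => /eqP.
Qed.

Lemma Phi_contract (hR : sym_tensor Rt) : contract s Phi = Rt.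
Proof.
apply: tensor_eq => v.
pose u (k : 'I_q.+2) := if unlift ord0 k is Some j then v j else s.
have hu0 : u ord0 = s by rewrite /u unlift_none.
rewrite (@teval_ext _ _ _ _ v (fun j => u (lift ord0 j))); last first.
  by move=> j; rewrite /u liftK.
rewrite teval_contract // teval_Phi (@Fx_CE hR _ ord0) //.
by apply: teval_ext => j; rewrite /u liftK.
Qed.

End Phi.

Unset Implicit Arguments.
Set Strict Implicit.
Set Printing Implicit Defensive.

Lemma dotv_ss (R : realType) n (s : 'rV[R]_n) : s != 0 -> dotv s s != 0.
Proof.
move=> hs; apply: contra hs => /eqP h; apply/eqP/rowP => i; rewrite mxE.
have h2 : forall j : 'I_n, xpredT j -> 0 <= s 0 j * s 0 j by move=> j _; rewrite -expr2 sqr_ge0.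
have := @psumr_eq0P _ _ xpredT (fun j => s 0 j * s 0 j) h2 h i isT.
by move/eqP; rewrite mulf_eq0 orbb => /eqP.
Qed.

Lemma sum_sq_split (R : realType) n p (A W : tensor R n p) :
  \sum_(idx : {ffun 'I_p -> 'I_n}) A idx * W idx = 0 ->
  \sum_(idx : {ffun 'I_p -> 'I_n}) (A idx + W idx) ^+ 2 =
  \sum_(idx : {ffun 'I_p -> 'I_n}) A idx ^+ 2 + \sum_(idx : {ffun 'I_p -> 'I_n}) W idx ^+ 2.
Proof.
move=> h.
have -> : \sum_(idx : {ffun 'I_p -> 'I_n}) (A idx + W idx) ^+ 2 =
  \sum_(idx : {ffun 'I_p -> 'I_n}) A idx ^+ 2 + \sum_(idx : {ffun 'I_p -> 'I_n}) W idx ^+ 2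
  + (\sum_(idx : {ffun 'I_p -> 'I_n}) A idx * W idx) *+ 2.
  rewrite -big_split -sumrMnl -big_split /=; apply: eq_bigr => i _; ring.
by rewrite h mul0rn addr0.
Qed.

Lemma contract_sub (R : realType) n p (s : 'rV[R]_n) (A B : tensor R n p) :
  contract s (tsub A B) = tsub (contract s A) (contract s B).
Proof.
apply/ffunP => idx; rewrite !ffunE -sumrB; apply: eq_bigr => i _.
by rewrite ffunE mulrBr.
Qed.

Theorem mainTheorem2 (R : realType) (n p : nat) (hp : (2 <= p)%N)
  (s : 'rV[R]_n) (hs : s != 0) (Rt : tensor R n p.-1) (hR : sym_tensor Rt) :
  let feasible (U : tensor R n p) := sym_tensor U /\ contract s U = Rt in
  let minimizer (U : tensor R n p) :=
    feasible U /\ (forall V : tensor R n p, feasible V -> frob U <= frob V) in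
  let charac (U : tensor R n p) :=
    feasible U /\
    (forall u : 'I_p -> 'rV[R]_n, (forall k, dotv (u k) s = 0) -> teval U u = 0) in
  exists U : tensor R n p,
    (minimizer U /\ forall V, minimizer V -> V = U) /\
    (charac U /\ forall V, charac V -> V = U).
Proof.
case: p hp Rt hR => [|[|q]] // _ Rt hR.
have hss := @dotv_ss _ _ _ hs.
move=> feasible minimizer charac.
have fPhi : feasible (Phi s Rt) by split; [exact: Phi_sym | exact: Phi_contract].
have zc : forall V, feasible V -> forall u (m : 'I_q.+2), u m = s ->
    teval (tsub V (Phi s Rt)) u = 0.
  move=> V [symV cV] u m hm.
  set W := tsub V (Phi s Rt).
  have symW : sym_tensor W.
    move=> sigma idx; rewrite /W /tsub ffunE [RHS]ffunE symV (Phi_sym hss hR) //.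
  have cW : contract s W = [ffun=> 0].
    rewrite /W contract_sub cV (Phi_contract hss hR).
    by apply/ffunP => idx'; rewrite !ffunE subrr.
  rewrite -(sym_teval symW (tperm ord0 m) u).
  rewrite -(@teval_contract _ _ _ W s); last by rewrite tpermL.
  by rewrite cW /teval big1 // => idx _; rewrite ffunE mul0r.
have key : forall V, feasible V ->
    \sum_(idx : {ffun 'I_q.+2 -> 'I_n}) Phi s Rt idx * tsub V (Phi s Rt) idx = 0.
  move=> V hV; exact: (orth hss (@Phi_perp _ _ _ _ _) (zc V hV)).
have sq_split : forall V, feasible V ->
    \sum_(idx : {ffun 'I_q.+2 -> 'I_n}) V idx ^+ 2 =
    \sum_(idx : {ffun 'I_q.+2 -> 'I_n}) Phi s Rt idx ^+ 2 +
    \sum_(idx : {ffun 'I_q.+2 -> 'I_n}) tsub V (Phi s Rt) idx ^+ 2.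
  move=> V hV; rewrite -(@sum_sq_split _ _ _ _ _ (key V hV)); apply: eq_bigr => idx _.
  by rewrite [tsub _ _ _]ffunE addrC subrK.
have W0 : forall V, \sum_(idx : {ffun 'I_q.+2 -> 'I_n}) tsub V (Phi s Rt) idx ^+ 2 = 0 ->
    V = Phi s Rt.
  move=> V h; apply/ffunP => idx.
  have := sumsq0 (D := tsub V (Phi s Rt)).
  have h' : \sum_(idx : {ffun 'I_q.+2 -> 'I_n}) tsub V (Phi s Rt) idx * tsub V (Phi s Rt) idx = 0.
    by rewrite -[RHS]h; apply: eq_bigr => i _; rewrite expr2.
  move=> /(_ h' idx); rewrite ffunE => /eqP; rewrite subr_eq0 => /eqP.
  by [].
have sq_ge0 : forall T : tensor R n q.+2,
    0 <= \sum_(idx : {ffun 'I_q.+2 -> 'I_n}) T idx ^+ 2.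
  by move=> T; apply: sumr_ge0 => i _; exact: sqr_ge0.
have minPhi : minimizer (Phi s Rt).
  split => // V hV; rewrite /frob ler_sqrt // (sq_split V hV).
  by rewrite lerDl.
exists (Phi s Rt); split.
  split => // V [hV hmin]; apply: W0.
  have := hmin _ fPhi; rewrite /frob ler_sqrt // (sq_split V hV) => h.
  apply/eqP; rewrite eq_le sq_ge0 andbT.
  by rewrite -(lerD2l (\sum_(idx : {ffun 'I_q.+2 -> 'I_n}) Phi s Rt idx ^+ 2)) addr0.
split.
  by split => //; exact: Phi_perp.
move=> V [hV hperp]; apply: W0.
have k1 := key V hV.
have k2 : \sum_(idx : {ffun 'I_q.+2 -> 'I_n}) V idx * tsub V (Phi s Rt) idx = 0.
  exact: (orth hss hperp (zc V hV)).
have -> : \sum_(idx : {ffun 'I_q.+2 -> 'I_n}) tsub V (Phi s Rt) idx ^+ 2 =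
   \sum_(idx : {ffun 'I_q.+2 -> 'I_n}) V idx * tsub V (Phi s Rt) idx -
   \sum_(idx : {ffun 'I_q.+2 -> 'I_n}) Phi s Rt idx * tsub V (Phi s Rt) idx.
  rewrite -sumrB; apply: eq_bigr => idx _; rewrite -mulrBl expr2; congr (_ * _).
  by rewrite ffunE.
by rewrite k1 k2 subrr.
Qed.
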